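(* Let $S_1=(x_1,y_1),S_2=(x_2,y_2),S_3=(x_3,y_3),S_4=(x_4,y_4)$ be four points in the plane with $x_1\le x_2\le x_3\le x_4$, and let $\delta_1,\ldots,\delta_4$ be positive integers. For $i\in\{1,\dots,4\}$ define the pivot point $P_i=(\tilde x_i,\tilde y_i)$ by $$\tilde x_i=x_i+\frac{\sum_{j=1}^4\delta_j(x_j-x_i)^2}{\sum_{j=1}^4\delta_j(x_j-x_i)},\qquad \tilde y_i=y_i+\frac{\sum_{j=1}^4\delta_j(x_j-x_i)(y_j-y_i)}{\sum_{j=1}^4\delta_j(x_j-x_i)},$$ whenever the denominator is nonzero. Then: (a) whenever $P_2$ is defined, there are real numbers $\lambda_1,\lambda_3,\lambda_4$ with $\lambda_1+\lambda_3+\lambda_4=1$ and $P_2=\lambda_1S_1+\lambda_3S_3+\lambda_4S_4$ such that either ($\lambda_1\ge 0$, $\lambda_3\le 0$, $\lambda_4\le 0$) or ($\lambda_1\le 0$, $\lambda_3\ge 0$, $\lambda_4\ge 0$); i.e. $P_2$ lies in the regions of sign pattern $+--$ or $-++$ with respect to the triangle $S_1S_3S_4$; (b) whenever $P_3$ is defined, there are real numbers $\mu_1,\mu_2,\mu_4$ with $\mu_1+\mu_2+\mu_4=1$ and $P_3=\mu_1S_1+\mu_2S_2+\mu_4S_4$ such that either ($\mu_1\ge0$, $\mu_2\ge 0$, $\mu_4\le 0$) or ($\mu_1\le 0$, $\mu_2\le 0$, $\mu_4\ge 0$); i.e. $P_3$ lies in the regions of sign pattern $++-$ or $--+$ with respect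 to the triangle $S_1S_2S_4$.
   Context: The pivot point $P_i$ is the point through which the least-squares regression line of the data, in which each $S_j$ appears $\delta_j$ times, always passes regardless of how many additional copies of $S_i$ are added; it is undefined when $\sum_j\delta_j(x_j-x_i)=0$. For a triangle $ABC$, the barycentric coordinates of a point $Q$ are the reals $(\lambda_A,\lambda_B,\lambda_C)$ with sum $1$ and $Q=\lambda_AA+\lambda_BB+\lambda_CC$ (unique when $A,B,C$ are not collinear); the sign pattern of $(\lambda_A,\lambda_B,\lambda_C)$ (e.g. $+--$) determines which of the seven regions cut out by the three edge-lines contains $Q$. *)

(* Defs.v *)
From mathcomp Require Import all_boot all_order all_algebra.
Set Implicit Arguments. Unset Strict Implicit. Unset Printing Implicit Defensive.
Import Order.TTheory GRing.Theory Num.Theory.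
Local Open Scope ring_scope.

(* Points S_j = (x j, y j) and multiplicities delta j, indexed 1..4 as in the
   paper (values at other indices are irrelevant). *)

Definition pivot_den (R : realFieldType) (x : nat -> R) (delta : nat -> nat)
  (i : nat) : R :=
  \sum_(1 <= j < 5) (delta j)%:R * (x j - x i).

Definition pivot_x (R : realFieldType) (x : nat -> R) (delta : nat -> nat)
  (i : nat) : R :=
  x i + (\sum_(1 <= j < 5) (delta j)%:R * (x j - x i) ^+ 2) / pivot_den x delta i.

Definition pivot_y (R : realFieldType) (x y : nat -> R) (delta : nat -> nat)
  (i : nat) : R :=
  y i + (\sum_(1 <= j < 5) (delta j)%:R * ((x j - x i) * (y j - y i)))
          / pivot_den x delta i.

(* Main.v *)
Require Import Defs.
From mathcomp Require Import all_boot all_order all_algebra.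
From mathcomp Require Import ring lra.
Import Order.TTheory GRing.Theory Num.Theory.
Local Open Scope ring_scope.

Lemma sum4 (R : realFieldType) (F : nat -> R) :
  \sum_(1 <= j < 5) F j = F 1%N + F 2%N + F 3%N + F 4%N.
Proof. by rewrite 4?big_ltn // big_geq // addr0 !addrA. Qed.

Lemma sgA (R : realFieldType) (a u D : R) : 0 <= a -> 0 < D -> 0 <= u -> 0 <= a * u / D.
Proof. by move=> ha hD hu; apply: divr_ge0; [apply: mulr_ge0|apply: ltW]. Qed.
Lemma sgB (R : realFieldType) (a u D : R) : 0 <= a -> 0 < D -> u <= 0 -> a * u / D <= 0.
Proof.
move=> ha hD hu; apply: mulr_le0_ge0; last by rewrite invr_ge0 ltW.
by rewrite mulr_ge0_le0.
Qed.
Lemma sgC (R : realFieldType) (a u D : R) : 0 <= a -> D < 0 -> 0 <= u -> a * u / D <= 0.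
Proof.
move=> ha hD hu; apply: mulr_ge0_le0; first by apply: mulr_ge0.
by rewrite invr_le0 ltW.
Qed.
Lemma sgD (R : realFieldType) (a u D : R) : 0 <= a -> D < 0 -> u <= 0 -> 0 <= a * u / D.
Proof.
move=> ha hD hu; apply: mulr_le0; last by rewrite invr_le0 ltW.
by rewrite mulr_ge0_le0.
Qed.

Theorem proposition3 (R : realFieldType) (x y : nat -> R) (delta : nat -> nat)
  (hdelta : forall j, (1 <= j <= 4)%N -> (0 < delta j)%N)
  (hx12 : x 1%N <= x 2%N) (hx23 : x 2%N <= x 3%N) (hx34 : x 3%N <= x 4%N) :
  (pivot_den x delta 2 != 0 ->
    exists l1 l3 l4 : R,
      [/\ l1 + l3 + l4 = 1,
          pivot_x x delta 2 = l1 * x 1%N + l3 * x 3%N + l4 * x 4%N,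
          pivot_y x y delta 2 = l1 * y 1%N + l3 * y 3%N + l4 * y 4%N &
          (0 <= l1 /\ l3 <= 0 /\ l4 <= 0) \/ (l1 <= 0 /\ 0 <= l3 /\ 0 <= l4)])
  /\
  (pivot_den x delta 3 != 0 ->
    exists m1 m2 m4 : R,
      [/\ m1 + m2 + m4 = 1,
          pivot_x x delta 3 = m1 * x 1%N + m2 * x 2%N + m4 * x 4%N,
          pivot_y x y delta 3 = m1 * y 1%N + m2 * y 2%N + m4 * y 4%N &
          (0 <= m1 /\ 0 <= m2 /\ m4 <= 0) \/ (m1 <= 0 /\ m2 <= 0 /\ 0 <= m4)]).
Proof.

have h0 : forall j, 0 <= (delta j)%:R :> R by move=> j; apply: ler0n.
rewrite /pivot_x /pivot_y /pivot_den !sum4.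
set d1 := (delta 1%N)%:R; set d2 := (delta 2%N)%:R;
set d3 := (delta 3%N)%:R; set d4 := (delta 4%N)%:R.
split=> hD.
- set D := (X in _ / X).
  exists (d1 * (x 1%N - x 2%N) / D), (d3 * (x 3%N - x 2%N) / D),
         (d4 * (x 4%N - x 2%N) / D); split.
  + rewrite /D; field; exact: hD.
  + rewrite /D; field; exact: hD.
  + rewrite /D; field; exact: hD.
  + have [Dn|Dp|D0] := ltgtP D 0; last by move: hD; rewrite -/D D0 eqxx.
    * left; split; [|split].
      - by apply: sgD => //; lra.
      - by apply: sgC => //; lra.
      - by apply: sgC => //; lra.
    * right; split; [|split].
      - by apply: sgB => //; lra.
      - by apply: sgA => //; lra.
      - by apply: sgA => //; lra.
- set D := (X in _ / X).
  exists (d1 * (x 1%N - x 3%N) / D), (d2 * (x 2%N - x 3%N) / D),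
         (d4 * (x 4%N - x 3%N) / D); split.
  + rewrite /D; field; exact: hD.
  + rewrite /D; field; exact: hD.
  + rewrite /D; field; exact: hD.
  + have [Dn|Dp|D0] := ltgtP D 0; last by move: hD; rewrite -/D D0 eqxx.
    * left; split; [|split].
      - by apply: sgD => //; lra.
      - by apply: sgD => //; lra.
      - by apply: sgC => //; lra.
    * right; split; [|split].
      - by apply: sgB => //; lra.
      - by apply: sgB => //; lra.
      - by apply: sgA => //; lra.
Qed.
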